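(* For all $\lambda$-terms $M,N$: if $M \twoheadrightarrow_\beta N$, then $\mathrm{BT}^c(M) \geq \mathrm{BT}^c(N)$, i.e. $N$ improves $M$ globally.
   Context: Untyped $\lambda$-calculus modulo $\alpha$; $\twoheadrightarrow_\beta$ is the reflexive-transitive closure of $\beta$-reduction. A head reduction step is a $\beta$-step of the form $\lambda x_1\ldots x_n.(\lambda y.M)NN_1\ldots N_m \to \lambda x_1\ldots x_n.M[y:=N]N_1\ldots N_m$ ($n,m\ge0$); a head normal form (hnf) is a term $\lambda x_1\ldots x_n.\,yN_1\ldots N_m$. The clocked Böhm tree $\mathrm{BT}^c(M)$ is the annotated, possibly infinite tree defined coinductively: if $M$ has no hnf then $\mathrm{BT}^c(M)=\bot$; otherwise the (unique) head reduction of $M$ to hnf has some length $k$, say $M \to_h^k \lambda x_1\ldots x_n.\,yM_1\ldots M_m$, and then $\mathrm{BT}^c(M)$ is the tree $\lambda x_1\ldots x_n.\,y\,\mathrm{BT}^c(M_1)\ldots\mathrm{BT}^c(M_m)$ whose root node carries the annotation $k$. Positions are finite sequences over $\{0,1,2\}$: the empty sequence is the root, $0p$ in $\lambda x.T$ is position $p$ of $T$, $1p$ (resp. $2p$) in an application $T_1T_2$ is position $p$ of $T_1$ (resp. $T_2$). For annotated trees $T_1,T_2$, write $T_1 \ge T_2$ if $T_1$ and $T_2$ are identical after erasing all annotations, and for every position $p$ either neither subtree at $p$ carries a root annotation, or both do, with annotations $k_1,k_2$ satisfying $k_1 \ge k_2$. $N$ improves $M$ globally if $\mathrm{BT}^c(N)\le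 \mathrm{BT}^c(M)$. *)

(* Defs.v *)
(* Untyped lambda calculus with de Bruijn indices
   (so terms are identified modulo alpha by construction). *)
From Stdlib Require Import Arith List Relations.
Import ListNotations.

Inductive term : Type :=
| Var : nat -> term
| App : term -> term -> term
| Lam : term -> term.

Fixpoint shift (c : nat) (t : term) : term :=
  match t with
  | Var x => Var (if c <=? x then S x else x)
  | App t1 t2 => App (shift c t1) (shift c t2)
  | Lam t1 => Lam (shift (S c) t1)
  end.

(* subst k u t : capture-avoiding substitution of u for variable k in t,
   decrementing the free variables above k (the binder is removed). *)
Fixpoint subst (k : nat) (u : term) (t : term) : term :=
  match t with
  | Var x => if x =? k then u else if k <? x then Var (pred x) else Var x
  | App t1 t2 => App (subst k u t1) (subst k u t2)
  | Lam t1 => Lam (subst (S k) (shift 0 u) t1)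
  end.

Inductive beta : term -> term -> Prop :=
| beta_redex t u : beta (App (Lam t) u) (subst 0 u t)
| beta_appl t t' u : beta t t' -> beta (App t u) (App t' u)
| beta_appr t u u' : beta u u' -> beta (App t u) (App t u')
| beta_lam t t' : beta t t' -> beta (Lam t) (Lam t').

Definition beta_star : term -> term -> Prop := clos_refl_trans term beta.

Inductive hstep : term -> term -> Prop :=
| h_beta t u : hstep (App (Lam t) u) (subst 0 u t)
| h_app t t' u : hstep t t' -> (forall b, t <> Lam b) -> hstep (App t u) (App t' u)
| h_lam t t' : hstep t t' -> hstep (Lam t) (Lam t').

Inductive hred : nat -> term -> term -> Prop :=
| hred_0 t : hred 0 t t
| hred_S k t t' t'' : hstep t t' -> hred k t' t'' -> hred (S k) t t''.

Inductive neutral : term -> Prop :=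
| neu_var x : neutral (Var x)
| neu_app t u : neutral t -> neutral (App t u).

Inductive is_hnf : term -> Prop :=
| hnf_neu t : neutral t -> is_hnf t
| hnf_lam t : is_hnf t -> is_hnf (Lam t).

Definition has_hnf (M : term) : Prop := exists H, beta_star M H /\ is_hnf H.

Inductive node : Type :=
| NBot : node
| NLam : node
| NApp : node
| NVar : nat -> node.

Definition head_node (t : term) : node :=
  match t with
  | Var x => NVar x
  | App _ _ => NApp
  | Lam _ => NLam
  end.

(* Positions: lists over {0,1,2} as in the paper. *)
Definition position := list nat.

(* An annotated, possibly infinite tree is given by its position lookup:
   T p nd a  means that position p exists in T, carries node label nd and
   annotation a (None = no root annotation at p). *)
Definition ctree := position -> node -> option nat -> Prop.

(* bt_at M p nd a : position p of BT^c(M) has label nd and annotation a.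
   sk_at H p nd a : same for the tree  \x1..xn. y BT^c(M1) .. BT^c(Mm)
   built from the hnf H = \x1..xn. y M1 .. Mm, without the root annotation. *)
Inductive bt_at : term -> position -> node -> option nat -> Prop :=
| bt_bot M : ~ has_hnf M -> bt_at M [] NBot None
| bt_root M k H : hred k M H -> is_hnf H -> bt_at M [] (head_node H) (Some k)
| bt_in M k H p nd a :
    hred k M H -> is_hnf H -> sk_at H p nd a -> p <> [] -> bt_at M p nd a
with sk_at : term -> position -> node -> option nat -> Prop :=
| sk_root t : sk_at t [] (head_node t) None
| sk_lam t p nd a : sk_at t p nd a -> sk_at (Lam t) (0 :: p) nd a
| sk_fun t u p nd a : sk_at t p nd a -> sk_at (App t u) (1 :: p) nd a
| sk_arg t u p nd a : bt_at u p nd a -> sk_at (App t u) (2 :: p) nd a.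

Definition BTc (M : term) : ctree := bt_at M.

Definition ctree_ge (T1 T2 : ctree) : Prop :=
  (forall p nd, (exists a, T1 p nd a) <-> (exists a, T2 p nd a)) /\
  (forall p nd1 a1 nd2 a2, T1 p nd1 a1 -> T2 p nd2 a2 ->
     match a1, a2 with
     | None, None => True
     | Some k1, Some k2 => k2 <= k1
     | _, _ => False
     end).

Definition improves_globally (N M : term) : Prop := ctree_ge (BTc M) (BTc N).

(* Main.v *)
Require Import Defs.
From Stdlib Require Import Arith List Relations Lia Classical.
Import ListNotations.

Ltac dec1 := match goal with
 | |- context [?a =? ?b] => destruct (Nat.eqb_spec a b)
 | |- context [?a <? ?b] => destruct (Nat.ltb_spec a b)
 | |- context [?a <=? ?b] => destruct (Nat.leb_spec a b)
 | H : context [?a =? ?b] |- _ => destruct (Nat.eqb_spec a b)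
 | H : context [?a <? ?b] |- _ => destruct (Nat.ltb_spec a b)
 | H : context [?a <=? ?b] |- _ => destruct (Nat.leb_spec a b) end.
Ltac dec := repeat (cbn [shift subst pred] in *; dec1); cbn [shift subst pred] in *.

Lemma shift_shift : forall t c d, c <= d -> shift c (shift d t) = shift (S d) (shift c t).
Proof. induction t; intros c d H; cbn [shift subst].
- dec; try (f_equal; lia); lia.
- rewrite IHt1, IHt2; auto.
- rewrite IHt; auto; lia. Qed.

Lemma subst_shift_cancel : forall t k u, subst k u (shift k t) = t.
Proof. induction t; intros k u; cbn [shift subst].
- dec; try (f_equal; lia); lia.
- rewrite IHt1, IHt2; auto.
- rewrite IHt; auto. Qed.

Lemma shift_subst_le : forall t c k u, c <= k ->
  shift c (subst k u t) = subst (S k) (shift c u) (shift c t).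
Proof. induction t; intros c k u H; cbn [shift subst].
- dec; try (f_equal; lia); try lia.
- rewrite IHt1, IHt2; auto.
- rewrite IHt by lia. rewrite (shift_shift u 0 c) by lia. auto. Qed.

Lemma shift_subst_ge : forall t c k u, k <= c ->
  shift c (subst k u t) = subst k (shift c u) (shift (S c) t).
Proof. induction t; intros c k u H; cbn [shift subst].
- dec; try (f_equal; lia); try lia.
- rewrite IHt1, IHt2; auto.
- rewrite IHt by lia. rewrite (shift_shift u 0 c) by lia. auto. Qed.

Lemma subst_subst : forall t j k N u,
  subst (j + k) N (subst j u t) = subst j (subst (j+k) N u) (subst (S (j+k)) (shift j N) t).
Proof. induction t; intros j k N u; cbn [shift subst].
- dec; try (f_equal; lia); try lia; try (rewrite subst_shift_cancel; auto).
- rewrite IHt1, IHt2; auto.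
- f_equal. replace (S (j+k)) with (S j + k) by lia. rewrite IHt.
  rewrite shift_subst_le by lia. rewrite (shift_shift N 0 j) by lia. reflexivity. Qed.

Lemma beta_shift : forall t t', beta t t' -> forall c, beta (shift c t) (shift c t').
Proof. induction 1; intros c; simpl; try (constructor; auto; fail).
  rewrite shift_subst_ge by lia. constructor. Qed.

Lemma beta_subst : forall t t', beta t t' -> forall k N, beta (subst k N t) (subst k N t').
Proof. induction 1; intros k N; simpl; try (constructor; auto; fail).
  pose proof (subst_subst t 0 k N u) as E. simpl in E. rewrite E. constructor. Qed.

Notation bs := beta_star.
Lemma bs_refl t : bs t t. Proof. apply rt_refl. Qed.
Lemma bs_step t t' : beta t t' -> bs t t'. Proof. apply rt_step. Qed.
Lemma bs_trans a b c : bs a b -> bs b c -> bs a c. Proof. apply rt_trans. Qed.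
Lemma bs_appl t t' u : bs t t' -> bs (App t u) (App t' u).
Proof. induction 1. apply bs_step; constructor; auto. apply bs_refl. eapply bs_trans; eauto. Qed.
Lemma bs_appr t u u' : bs u u' -> bs (App t u) (App t u').
Proof. induction 1. apply bs_step; constructor; auto. apply bs_refl. eapply bs_trans; eauto. Qed.
Lemma bs_lam t t' : bs t t' -> bs (Lam t) (Lam t').
Proof. induction 1. apply bs_step; constructor; auto. apply bs_refl. eapply bs_trans; eauto. Qed.
Lemma bs_shift t t' : bs t t' -> forall c, bs (shift c t) (shift c t').
Proof. induction 1; intro c. apply bs_step; apply beta_shift; auto. apply bs_refl. eapply bs_trans; eauto. Qed.
Lemma bs_subst_arg : forall t k N N', beta N N' -> bs (subst k N t) (subst k N' t).
Proof. induction t; intros k N N' H; simpl.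
- destruct (n =? k). apply bs_step; auto. apply bs_refl.
- eapply bs_trans. apply bs_appl; eauto. apply bs_appr; eauto.
- apply bs_lam. apply IHt. apply beta_shift; auto. Qed.

Lemma hstep_beta t t' : hstep t t' -> beta t t'.
Proof. induction 1; constructor; auto. Qed.
Lemma hred_bs k t t' : hred k t t' -> bs t t'.
Proof. induction 1. apply bs_refl. eapply bs_trans; [apply bs_step, hstep_beta|]; eauto. Qed.
Lemma hred_trans a b c i j : hred i a b -> hred j b c -> hred (i + j) a c.
Proof. induction 1; intros; simpl; auto. econstructor; eauto. Qed.
Lemma hred_lam k t t' : hred k t t' -> hred k (Lam t) (Lam t').
Proof. induction 1; econstructor; eauto. constructor; auto. Qed.
Lemma hstep_det t t1 : hstep t t1 -> forall t2, hstep t t2 -> t1 = t2.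
Proof. induction 1; intros t2 H2; inversion H2; subst; auto.
- exfalso; eapply H4; eauto.
- exfalso; eapply H0; eauto.
- f_equal; auto.
- f_equal; auto. Qed.
Lemma neutral_nostep t : neutral t -> forall t', ~ hstep t t'.
Proof. induction 1; intros t' H'; inversion H'; subst. inversion H. eapply IHneutral; eauto. Qed.
Lemma hnf_nostep t : is_hnf t -> forall t', ~ hstep t t'.
Proof. induction 1; intros t' H'. eapply neutral_nostep; eauto.
  inversion H'; subst; eapply IHis_hnf; eauto. Qed.
Lemma hred_det k M H : hred k M H -> is_hnf H -> forall k' H', hred k' M H' -> is_hnf H' -> k = k' /\ H = H'.
Proof. induction 1; intros Hh k' H' R Hh'.
- inversion R; subst; auto. exfalso; eapply (hnf_nostep _ Hh); eauto.
- inversion R; subst. exfalso; eapply hnf_nostep; eauto.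
  pose proof (hstep_det _ _ H _ H1); subst. destruct (IHhred Hh _ _ H2 Hh'); subst; auto. Qed.

Inductive w : term -> term -> Prop :=
| w_beta t u : w (App (Lam t) u) (subst 0 u t)
| w_app t t' u : w t t' -> w (App t u) (App t' u).
Inductive ws : term -> term -> Prop :=
| ws_refl t : ws t t
| ws_step a b c : w a b -> ws b c -> ws a c.
Lemma ws_trans a b c : ws a b -> ws b c -> ws a c.
Proof. induction 1; intros; auto. econstructor; eauto. Qed.
Lemma ws_app t t' u : ws t t' -> ws (App t u) (App t' u).
Proof. induction 1. constructor. econstructor. constructor; eauto. auto. Qed.
Lemma w_shift t t' : w t t' -> forall c, w (shift c t) (shift c t').
Proof. induction 1; intros c; simpl. rewrite shift_subst_ge by lia. constructor. constructor; auto. Qed.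
Lemma w_subst t t' : w t t' -> forall k N, w (subst k N t) (subst k N t').
Proof. induction 1; intros k N; simpl.
  pose proof (subst_subst t 0 k N u) as E. simpl in E. rewrite E. constructor.
  constructor; auto. Qed.
Lemma ws_shift t t' : ws t t' -> forall c, ws (shift c t) (shift c t').
Proof. induction 1; intros. constructor. econstructor; eauto using w_shift. Qed.
Lemma ws_subst t t' : ws t t' -> forall k N, ws (subst k N t) (subst k N t').
Proof. induction 1; intros. constructor. econstructor; eauto using w_subst. Qed.

Inductive st : term -> term -> Prop :=
| st_var M x : ws M (Var x) -> st M (Var x)
| st_lam M P Q : ws M (Lam P) -> st P Q -> st M (Lam Q)
| st_app M P Q P' Q' : ws M (App P Q) -> st P P' -> st Q Q' -> st M (App P' Q').

Lemma st_refl t : st t t.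
Proof. induction t. constructor; constructor. econstructor; eauto; constructor.
  econstructor; eauto; constructor. Qed.
Lemma st_prepend M M' N : ws M M' -> st M' N -> st M N.
Proof. intros H1 H2; inversion H2; subst; econstructor; eauto using ws_trans. Qed.
Lemma st_shift M N : st M N -> forall c, st (shift c M) (shift c N).
Proof. induction 1; intros c.
- simpl. constructor. apply (ws_shift _ _ H c).
- simpl. econstructor. apply (ws_shift _ _ H c). auto.
- simpl. econstructor. apply (ws_shift _ _ H c). auto. auto. Qed.
Lemma st_subst M M' : st M M' -> forall k N N', st N N' -> st (subst k N M) (subst k N' M').
Proof. induction 1; intros k N N' HN.
- pose proof (ws_subst _ _ H k N) as W. simpl in *.
  destruct (x =? k). eapply st_prepend; eauto.
  destruct (k <? x); constructor; auto.
- pose proof (ws_subst _ _ H k N) as W. simpl in *. econstructor; eauto.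
  apply IHst. apply st_shift; auto.
- pose proof (ws_subst _ _ H k N) as W. simpl in *. econstructor; eauto. Qed.
Lemma st_redex M P Q : st M (App (Lam P) Q) -> st M (subst 0 Q P).
Proof. intros H; inversion H; subst. inversion H4; subst.
  apply st_prepend with (subst 0 Q0 P1).
  eapply ws_trans. eauto. eapply ws_trans. apply ws_app; eauto.
  econstructor. constructor. constructor.
  apply st_subst; auto. Qed.
Lemma st_beta N N' : beta N N' -> forall M, st M N -> st M N'.
Proof. induction 1; intros M HM.
- apply st_redex; auto.
- inversion HM; subst. econstructor; eauto.
- inversion HM; subst. econstructor; eauto.
- inversion HM; subst. econstructor; eauto. Qed.
Lemma bs_st M N : bs M N -> st M N.
Proof. intros H. apply clos_rt_rtn1 in H. induction H. apply st_refl. eapply st_beta; eauto. Qed.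

Lemma w_hstep a b : w a b -> hstep a b.
Proof. induction 1. constructor. constructor; auto. intros b0 E; subst. inversion H. Qed.
Lemma ws_hred a b : ws a b -> exists k, hred k a b.
Proof. induction 1. exists 0; constructor. destruct IHws as [k Hk]. exists (S k). econstructor; eauto using w_hstep. Qed.
Lemma st_neutral M N : st M N -> neutral N -> exists M', ws M M' /\ neutral M'.
Proof. induction 1; intros Hn; inversion Hn; subst.
- exists (Var x); split; [assumption|constructor].
- destruct (IHst1 H3) as [M' [W Hn']]. exists (App M' Q). split.
  eapply ws_trans; eauto. apply ws_app; auto. constructor; auto. Qed.
Lemma st_hnf H : is_hnf H -> forall M, st M H -> exists k H', hred k M H' /\ is_hnf H'.
Proof. induction 1; intros M HM.
- destruct (st_neutral _ _ HM H) as [M' [W Hn]]. destruct (ws_hred _ _ W) as [k Hk].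
  exists k, M'. split; auto. constructor; auto.
- inversion HM; subst. destruct (IHis_hnf _ H3) as [k [H' [R Hh]]].
  destruct (ws_hred _ _ H1) as [k0 Hk0]. exists (k0 + k), (Lam H'). split.
  eapply hred_trans; eauto. apply hred_lam; auto. apply hnf_lam; auto. Qed.
Lemma has_hnf_hred M : has_hnf M -> exists k H, hred k M H /\ is_hnf H.
Proof. intros [H [B Hh]]. eapply st_hnf; eauto. apply bs_st; auto. Qed.

Lemma beta_to_lam t t2 b : beta t t2 -> t2 = Lam b -> (forall b, t <> Lam b) ->
  exists a c, t = App (Lam a) c /\ t2 = subst 0 c a.
Proof. intros H; inversion H; subst; intros E NL; try discriminate; eauto.
  exfalso; eapply NL; eauto. Qed.

Lemma E1 M M1 : hstep M M1 -> forall N, beta M N -> exists N1, (N = N1 \/ hstep N N1) /\ bs M1 N1.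
Proof. induction 1; intros N HB.
- inversion HB; subst.
  + exists (subst 0 u t); split; auto. apply bs_refl.
  + inversion H2; subst. exists (subst 0 u t'0); split. right; constructor.
    apply bs_step, beta_subst; auto.
  + exists (subst 0 u' t); split. right; constructor. apply bs_subst_arg; auto.
- inversion HB; subst.
  + exfalso; eapply H0; eauto.
  + destruct t'0 as [x|p q|b].
    * destruct (IHhstep _ H4) as [N1 [[E|Hs] B]]; subst.
      exists (App (Var x) u). split; auto. apply bs_appl; auto.
      inversion Hs.
    * destruct (IHhstep _ H4) as [N1 [[E|Hs] B]]; subst.
      exists (App (App p q) u). split; auto. apply bs_appl; auto.
      exists (App N1 u). split. right. constructor; auto. intros b E; discriminate.
      apply bs_appl; auto.
    * destruct (beta_to_lam _ _ b H4 eq_refl H0) as [a [c [E1 E2]]]; subst.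
      inversion H; subst. 2:{ exfalso; eapply H6; eauto. }
      rewrite <- E2. exists (App (Lam b) u). split; auto. apply bs_refl.
  + exists (App t' u'). split. right. constructor; auto. apply bs_appr. apply bs_step; auto.
- inversion HB; subst. destruct (IHhstep _ H1) as [N1 [[E|Hs] B]]; subst.
  exists (Lam N1). split; auto. apply bs_lam; auto.
  exists (Lam N1). split. right; constructor; auto. apply bs_lam; auto. Qed.

Lemma E2 M M1 : hstep M M1 -> forall N, bs M N -> exists N1, (N = N1 \/ hstep N N1) /\ bs M1 N1.
Proof. intros Hs N HB. apply clos_rt_rt1n in HB. revert M1 Hs. induction HB; intros M1 Hs.
- exists M1. split; auto. apply bs_refl.
- destruct (E1 _ _ Hs _ H) as [N1' [[E|Hs'] B]]; subst.
  + exists z. split; auto. eapply bs_trans; eauto. apply clos_rt1n_rt; auto.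
  + destruct (IHHB _ Hs') as [N1 [O B']]. exists N1. split; auto. eapply bs_trans; eauto. Qed.

Inductive sim : term -> term -> Prop :=
| sim_var x : sim (Var x) (Var x)
| sim_lam t t' : sim t t' -> sim (Lam t) (Lam t')
| sim_app t t' u u' : sim t t' -> bs u u' -> sim (App t u) (App t' u').

Lemma sim_refl t : sim t t.
Proof. induction t; constructor; auto. apply bs_refl. Qed.
Lemma sim_trans a b : sim a b -> forall c, sim b c -> sim a c.
Proof. induction 1; intros c Hc; inversion Hc; subst; constructor; eauto using bs_trans. Qed.
Lemma neutral_beta t : neutral t -> forall t', beta t t' -> neutral t' /\ sim t t'.
Proof. induction 1; intros t' HB; inversion HB; subst.
- inversion H.
- destruct (IHneutral _ H3). split; constructor; auto. apply bs_refl.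
- split. constructor; auto. constructor. apply sim_refl. apply bs_step; auto. Qed.
Lemma hnf_beta t : is_hnf t -> forall t', beta t t' -> is_hnf t' /\ sim t t'.
Proof. induction 1; intros t' HB.
- destruct (neutral_beta _ H _ HB). split; auto. constructor; auto.
- inversion HB; subst. destruct (IHis_hnf _ H1). split. apply hnf_lam; auto. constructor; auto. Qed.
Lemma hnf_bs t t' : bs t t' -> is_hnf t -> is_hnf t' /\ sim t t'.
Proof. intros HB. apply clos_rt_rt1n in HB. induction HB; intros Hh.
- split; auto. apply sim_refl.
- destruct (hnf_beta _ Hh _ H). destruct (IHHB H0). split; auto. eapply sim_trans; eauto. Qed.

Lemma E3 k M HM : hred k M HM -> is_hnf HM -> forall N, bs M N ->
  exists j HN, hred j N HN /\ j <= k /\ is_hnf HN /\ sim HM HN.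
Proof. induction 1; intros Hh N HB.
- destruct (hnf_bs _ _ HB Hh). exists 0, N. repeat split; auto. constructor.
- destruct (E2 _ _ H _ HB) as [N1 [[E|Hs] B]]; subst.
  + destruct (IHhred Hh _ B) as [j [HN [R [Le [Hh' Sm]]]]]. exists j, HN. repeat split; auto.
  + destruct (IHhred Hh _ B) as [j [HN [R [Le [Hh' Sm]]]]]. exists (S j), HN. repeat split; auto.
    econstructor; eauto. lia. Qed.

Definition compat (a1 a2 : option nat) : Prop :=
  match a1, a2 with
  | None, None => True
  | Some k1, Some k2 => k2 <= k1
  | _, _ => False
  end.

Definition Gp (p : position) : Prop := forall M N, bs M N ->
  (forall nd, (exists a, bt_at M p nd a) <-> (exists a, bt_at N p nd a)) /\
  (forall nd1 a1 nd2 a2, bt_at M p nd1 a1 -> bt_at N p nd2 a2 -> compat a1 a2).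
Definition Skp (p : position) : Prop := forall H H', sim H H' ->
  (forall nd, (exists a, sk_at H p nd a) <-> (exists a, sk_at H' p nd a)) /\
  (forall nd1 a1 nd2 a2, sk_at H p nd1 a1 -> sk_at H' p nd2 a2 -> compat a1 a2).

Lemma hred_has_hnf k M H : hred k M H -> is_hnf H -> has_hnf M.
Proof. intros. exists H. split; auto. eapply hred_bs; eauto. Qed.
Lemma bt_nohnf M p nd a : ~ has_hnf M -> bt_at M p nd a -> p = [] /\ nd = NBot /\ a = None.
Proof. intros NH B; inversion B; subst; auto; exfalso; apply NH; eapply hred_has_hnf; eauto. Qed.
Lemma bt_hnf_root k M H nd a : hred k M H -> is_hnf H -> bt_at M [] nd a -> nd = head_node H /\ a = Some k.
Proof. intros R Hh B; inversion B; subst.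
- exfalso; apply H0; eapply hred_has_hnf; eauto.
- destruct (hred_det _ _ _ R Hh _ _ H1 H2); subst; auto.
- congruence. Qed.
Lemma bt_hnf_iff k M H p nd a : hred k M H -> is_hnf H -> p <> [] -> (bt_at M p nd a <-> sk_at H p nd a).
Proof. intros R Hh Np; split; intro B.
- inversion B; subst; try congruence. destruct (hred_det _ _ _ R Hh _ _ H1 H2); subst; auto.
- eapply bt_in; eauto. Qed.
Lemma sim_head a b : sim a b -> head_node a = head_node b.
Proof. destruct 1; reflexivity. Qed.

Lemma main_p : forall p, Skp p /\ Gp p.
Proof. induction p as [|i p IH].
- split.
  + intros H H' Sm. split.
    * intros nd; split; intros [a B]; inversion B; subst; exists None;
        [rewrite (sim_head _ _ Sm) | rewrite <- (sim_head _ _ Sm)]; constructor.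
    * intros nd1 a1 nd2 a2 B1 B2; inversion B1; inversion B2; subst; simpl; auto.
  + intros M N HB. destruct (classic (has_hnf M)) as [HH|NH].
    * destruct (has_hnf_hred _ HH) as [k [HM [R Hh]]].
      destruct (E3 _ _ _ R Hh _ HB) as [j [HN [R' [Le [Hh' Sm]]]]].
      split.
      -- intros nd; split; intros [a B].
         ++ destruct (bt_hnf_root _ _ _ _ _ R Hh B); subst. exists (Some j).
            rewrite (sim_head _ _ Sm). eapply bt_root; eauto.
         ++ destruct (bt_hnf_root _ _ _ _ _ R' Hh' B); subst. exists (Some k).
            rewrite <- (sim_head _ _ Sm). eapply bt_root; eauto.
      -- intros nd1 a1 nd2 a2 B1 B2.
         destruct (bt_hnf_root _ _ _ _ _ R Hh B1); destruct (bt_hnf_root _ _ _ _ _ R' Hh' B2); subst.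
         simpl; auto.
    * assert (NH' : ~ has_hnf N).
      { intros [H [B Hh]]. apply NH. exists H; split; auto. eapply bs_trans; eauto. }
      split.
      -- intros nd; split; intros [a B].
         ++ destruct (bt_nohnf _ _ _ _ NH B) as [_ [E1 E2]]; subst. exists None. constructor; auto.
         ++ destruct (bt_nohnf _ _ _ _ NH' B) as [_ [E1 E2]]; subst. exists None. constructor; auto.
      -- intros nd1 a1 nd2 a2 B1 B2.
         destruct (bt_nohnf _ _ _ _ NH B1) as [_ [_ E1]]; destruct (bt_nohnf _ _ _ _ NH' B2) as [_ [_ E2]]; subst.
         simpl; auto.
- destruct IH as [SkI GI].
  assert (SK : Skp (i :: p)).
  { intros H H' Sm. split.
    - intros nd; split; intros [a B].
      + inversion B; subst; inversion Sm; subst;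
        match goal with
        | Hs : sim ?t ?t', Hk : sk_at ?t p ?nd ?a |- _ =>
          destruct ((proj1 (proj1 (SkI _ _ Hs) nd)) (ex_intro _ a Hk)) as [a' B']; exists a'; constructor; exact B'
        | Hs : bs ?t ?t', Hk : bt_at ?t p ?nd ?a |- _ =>
          destruct ((proj1 (proj1 (GI _ _ Hs) nd)) (ex_intro _ a Hk)) as [a' B']; exists a'; constructor; exact B'
        end.
      + inversion B; subst; inversion Sm; subst;
        match goal with
        | Hs : sim ?t ?t', Hk : sk_at ?t' p ?nd ?a |- _ =>
          destruct ((proj2 (proj1 (SkI _ _ Hs) nd)) (ex_intro _ a Hk)) as [a' B']; exists a'; constructor; exact B'
        | Hs : bs ?t ?t', Hk : bt_at ?t' p ?nd ?a |- _ =>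
          destruct ((proj2 (proj1 (GI _ _ Hs) nd)) (ex_intro _ a Hk)) as [a' B']; exists a'; constructor; exact B'
        end.
    - intros nd1 a1 nd2 a2 B1 B2. inversion B1; subst; inversion Sm; subst; inversion B2; subst;
        match goal with
        | Hs : sim ?t ?t', K1 : sk_at ?t p _ _, K2 : sk_at ?t' p _ _ |- _ =>
          exact (proj2 (SkI _ _ Hs) _ _ _ _ K1 K2)
        | Hs : bs ?t ?t', K1 : bt_at ?t p _ _, K2 : bt_at ?t' p _ _ |- _ =>
          exact (proj2 (GI _ _ Hs) _ _ _ _ K1 K2)
        end. }
  split; auto.
  intros M N HB. destruct (classic (has_hnf M)) as [HH|NH].
  + destruct (has_hnf_hred _ HH) as [k [HM [R Hh]]].
    destruct (E3 _ _ _ R Hh _ HB) as [j [HN [R' [Le [Hh' Sm]]]]].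
    assert (Np : i :: p <> []) by discriminate.
    destruct (SK _ _ Sm) as [S1 S2]. split.
    * intros nd.
      split; intros [a B].
      -- rewrite (bt_hnf_iff _ _ _ _ nd a R Hh Np) in B. destruct (proj1 (S1 nd) (ex_intro _ a B)) as [a' B'].
         exists a'. rewrite (bt_hnf_iff _ _ _ _ nd a' R' Hh' Np). auto.
      -- rewrite (bt_hnf_iff _ _ _ _ nd a R' Hh' Np) in B. destruct (proj2 (S1 nd) (ex_intro _ a B)) as [a' B'].
         exists a'. rewrite (bt_hnf_iff _ _ _ _ nd a' R Hh Np). auto.
    * intros nd1 a1 nd2 a2 B1 B2.
      rewrite (bt_hnf_iff _ _ _ _ _ _ R Hh Np) in B1. rewrite (bt_hnf_iff _ _ _ _ _ _ R' Hh' Np) in B2.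
      eauto.
  + assert (NH' : ~ has_hnf N).
    { intros [H [B Hh]]. apply NH. exists H; split; auto. eapply bs_trans; eauto. }
    split.
    * intros nd; split; intros [a B].
      -- destruct (bt_nohnf _ _ _ _ NH B) as [E _]; discriminate.
      -- destruct (bt_nohnf _ _ _ _ NH' B) as [E _]; discriminate.
    * intros nd1 a1 nd2 a2 B1 B2. destruct (bt_nohnf _ _ _ _ NH B1) as [E _]; discriminate.
Qed.

Theorem proposition4p5 : forall M N : term,
  beta_star M N -> ctree_ge (BTc M) (BTc N).
Proof. intros M N HB. split.
- intros p nd. apply (proj2 (main_p p) M N HB).
- intros p nd1 a1 nd2 a2 B1 B2. apply (proj2 (proj2 (main_p p) M N HB) nd1 a1 nd2 a2 B1 B2).
Qed.
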